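(* Let $\mathbf{L}=(L,\le)$ be a finite lattice with more than two elements (least element $0$, greatest element $1$) and let $(R,\vee,\circ)$ be a subsemiring of $(\mathrm{Res}_1(\mathbf{L}),\vee,\circ)$ such that (i) $f_{a,0}\in R$ for every $a\in L\setminus\{1\}$; (ii) for every $f\in R$ there exists $a\in L\setminus\{1\}$ with $f_{a,0}\le f$ (pointwise); (iii) for all $a\in L\setminus\{0,1\}$ and all $b\in L$ there exists $f\in R$ with $f(a)=b$. Then $(R,\vee,\circ)$ is a finite simple additively idempotent semiring whose greatest element is right but not left absorbing. Conversely, every finite simple additively idempotent semiring $(S,+,\cdot)$ with $|S|>2$ whose greatest element is right but not left absorbing is isomorphic to such a semiring $(R,\vee,\circ)$ for some such lattice $\mathbf{L}$.
   Context: A semiring is a nonempty set with a commutative semigroup operation $+$ and a semigroup operation $\cdot$ satisfying both distributive laws. It is simple if its only congruences are the identity and the full relation; additively idempotent if $r+r=r$; then $x\le y:\Leftrightarrow x+y=y$ is a partial order, and for finite semirings the greatest element is the sum of all elements. An element $r$ is right absorbing if $sr=r$ for all $s$, left absorbing if $rs=r$ for all $s$. For a finite lattice $\mathbf{L}$, $\mathrm{Res}_1(\mathbf{L})$ is the set of maps $f:L\to L$ preserving binary joins with $f(0)=0$ and $f(1)=1$, a semiring under pointwise join and composition. For $a,b\in L$, $f_{a,b}:L\to L$ is defined by $f_{a,b}(x)=b$ if $x\le a$ and $f_{a,b}(x)=1$ otherwise. *)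

(* Defs.v *)
From HB Require Import structures.
From mathcomp Require Import all_boot all_order.
Set Implicit Arguments. Unset Strict Implicit. Unset Printing Implicit Defensive.
Import Order.TTheory.
Local Open Scope order_scope.

Section SemiringOn.
Variables (T : Type) (A : T -> Prop) (add mul : T -> T -> T).

Definition semiring_on : Prop :=
  [/\ (exists x, A x) /\
        (forall x y, A x -> A y -> A (add x y) /\ A (mul x y)),
      (forall x y, A x -> A y -> add x y = add y x),
      (forall x y z, A x -> A y -> A z -> add x (add y z) = add (add x y) z),
      (forall x y z, A x -> A y -> A z -> mul x (mul y z) = mul (mul x y) z)
    & (forall x y z, A x -> A y -> A z ->
         mul x (add y z) = add (mul x y) (mul x z) /\
         mul (add x y) z = add (mul x z) (mul y z))].

Definition congruence_on (r : T -> T -> Prop) : Prop :=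
  [/\ (forall x, A x -> r x x),
      (forall x y, A x -> A y -> r x y -> r y x),
      (forall x y z, A x -> A y -> A z -> r x y -> r y z -> r x z)
    & (forall x y u v, A x -> A y -> A u -> A v -> r x y -> r u v ->
         r (add x u) (add y v) /\ r (mul x u) (mul y v))].

Definition simple_on : Prop :=
  forall r, congruence_on r ->
    (forall x y, A x -> A y -> (r x y <-> x = y)) \/
    (forall x y, A x -> A y -> r x y).

Definition add_idempotent_on : Prop := forall x, A x -> add x x = x.

(** greatest element w.r.t. x <= y :<-> x + y = y *)
Definition greatest_on (g : T) : Prop := A g /\ forall x, A x -> add x g = g.

Definition right_absorbing_on (g : T) : Prop := forall s, A s -> mul s g = g.
Definition left_absorbing_on (g : T) : Prop := forall s, A s -> mul g s = g.

Definition greatest_right_not_left_absorbing_on : Prop :=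
  exists g, [/\ greatest_on g, right_absorbing_on g & ~ left_absorbing_on g].

End SemiringOn.

Section Res1.
Variables (d : Order.disp_t) (L : finTBLatticeType d).

Definition Res1 (f : {ffun L -> L}) : Prop :=
  [/\ (forall x y, f (x `|` y) = f x `|` f y), f \bot = \bot & f \top = \top].

Definition fjoin (f g : {ffun L -> L}) : {ffun L -> L} := [ffun x => f x `|` g x].
Definition fcomp (f g : {ffun L -> L}) : {ffun L -> L} := [ffun x => f (g x)].

Definition fab (a b : L) : {ffun L -> L} := [ffun x => if x <= a then b else \top].

Definition subsemiring_Res1 (R : {set {ffun L -> L}}) : Prop :=
  [/\ R != set0,
      (forall f, f \in R -> Res1 f)
    & (forall f g, f \in R -> g \in R -> fjoin f g \in R /\ fcomp f g \in R)].

Definition conditions_Res1 (R : {set {ffun L -> L}}) : Prop :=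
  [/\ (forall a : L, a != \top -> fab a \bot \in R),
      (forall f, f \in R -> exists a : L, a != \top /\ forall x, fab a \bot x <= f x)
    & (forall a : L, a != \bot -> a != \top -> forall b : L,
         exists2 f, f \in R & f a = b)].

End Res1.

(* Main.v *)
Require Import Defs.
From HB Require Import structures.
From mathcomp Require Import all_boot all_order.
From Stdlib Require Import Classical.
Import Order.TTheory.
Local Open Scope order_scope.
Set Implicit Arguments. Unset Strict Implicit.

Section Dir1.
Variables (d : Order.disp_t) (L : finTBLatticeType d) (R : {set {ffun L -> L}}).
Hypothesis hL : (2 < #|L|)%N.
Hypothesis hsub : subsemiring_Res1 R.
Hypothesis hcond : conditions_Res1 R.

Lemma Res1_mono (f : {ffun L -> L}) : Res1 f -> forall x y, x <= y -> f x <= f y.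
Proof. by case=> hj _ _ x y /join_r <-; rewrite hj leUl. Qed.

Lemma bot_neq_top : (\bot : L) != \top.
Proof.
apply/eqP=> h; move: hL; rewrite ltnNge => /negP; apply.
apply: (@leq_trans 1) => //; apply/fintype_le1P => x y.
have e z : z = (\bot : L) by apply/eqP; rewrite -lex0 h lex1.
by rewrite (e x) (e y).
Qed.

Lemma exists_mid : exists a : L, a != \bot /\ a != \top.
Proof.
apply: NNPP => hn.
have sub : [set: L] \subset [set \bot; \top].
  apply/subsetP => x _; rewrite !inE.
  case: (eqVneq x \bot) => //= hb; case: (eqVneq x \top) => // ht.
  by exfalso; apply: hn; exists x.
move: (subset_leq_card sub); rewrite cardsT cards2 => h.
have : (#|L| <= 2)%N by apply: leq_trans h _; case: (_ != _).
by rewrite leqNgt hL.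
Qed.

Definition topf : {ffun L -> L} := fab \bot (\bot : L).

Lemma R_Res1 f : f \in R -> Res1 f.
Proof. by case: hsub => _ h _; apply: h. Qed.

Lemma R_join f g : f \in R -> g \in R -> fjoin f g \in R.
Proof. by case: hsub => _ _ h ? ?; case: (h f g). Qed.

Lemma R_comp f g : f \in R -> g \in R -> fcomp f g \in R.
Proof. by case: hsub => _ _ h ? ?; case: (h f g). Qed.

Lemma R_fab a : a != \top -> fab a \bot \in R.
Proof. by case: hcond => h _ _; apply: h. Qed.

Lemma topf_R : topf \in R.
Proof. exact: R_fab bot_neq_top. Qed.

Lemma join_topf f : f \in R -> fjoin f topf = topf.
Proof.
move=> /R_Res1 [_ h0 _]; apply/ffunP => x; rewrite !ffunE.
case: ifP => [|_]; last by rewrite joinx1.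
by rewrite lex0 => /eqP ->; rewrite h0 joinxx.
Qed.

Lemma fab_bt (a x : L) : fab a \bot x = \bot \/ fab a \bot x = \top.
Proof. by rewrite ffunE; case: ifP; [left|right]. Qed.

Lemma Res1_fab (f : {ffun L -> L}) (a x : L) : Res1 f -> f (fab a \bot x) = fab a \bot x.
Proof. by case=> _ h0 h1; rewrite ffunE; case: ifP. Qed.

Lemma bt_fab (Q : {ffun L -> L}) : Res1 Q -> (forall z, Q z = (\bot : L) \/ Q z = \top) ->
  let a := \join_(z | Q z == (\bot : L)) z in Q = fab a \bot /\ a != \top.
Proof.
move=> hQ hbt a.
have Qa : Q a = \bot.
  case: hQ => hj h0 h1.
  rewrite /a (big_morph Q hj h0); apply: big1 => i /eqP //.
have mono := Res1_mono hQ.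
split.
  apply/ffunP=> z; rewrite ffunE; case: ifP => hz.
    by apply/eqP; rewrite -lex0 -Qa mono.
  case: (hbt z) => // hz0; exfalso; move/negP: hz; apply.
  by apply: joins_sup; rewrite hz0.
apply/eqP=> ha; move: Qa; rewrite ha; case: hQ => _ _ ->.
by move/eqP; rewrite eq_sym (negbTE bot_neq_top).
Qed.

Lemma simpleR : simple_on (fun f => f \in R) (@fjoin d L) (@fcomp d L).
Proof.
move=> r [rrefl rsym rtrans rcomp].
case: (classic (forall x y, x \in R -> y \in R -> r x y -> x = y)) => hid.
  by left=> x y hx hy; split; [apply: hid|move=> ->; apply: rrefl].
right.
have [G [H [hG hH rGH leGH neGH]]] : exists G H, [/\ G \in R, H \in R,
   r G H, (forall z, G z <= H z) & G != H].
  move: hid => /not_all_ex_not [x /not_all_ex_not [y hxy]].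
  have [hx hy rxy nxy] : [/\ x \in R, y \in R, r x y & x <> y].
    by apply: NNPP => hn; apply: hxy => hx hy rxy; apply: NNPP => ne; apply: hn.
  have rh : r (fjoin x y) y.
    by have [h _] := rcomp _ _ _ _ hx hy hy hy rxy (rrefl _ hy); rewrite -{2}(_ : fjoin y y = y) //; apply/ffunP => z; rewrite ffunE joinxx.
  case: (eqVneq (fjoin x y) y) => hyj.
    exists x, y; split => //.
      by move=> z; rewrite -hyj ffunE leUl.
    by apply/eqP.
  exists y, (fjoin x y); split => //; first exact: R_join.
    exact: rsym (R_join hx hy) hy rh.
    by move=> z; rewrite ffunE leUr.
  by rewrite eq_sym.
have [v hv] : exists v, G v != H v.
  apply: NNPP => hn; move/eqP: neGH; apply; apply/ffunP => v.
  by apply/eqP; apply: NNPP => hn'; apply: hn; exists v; apply/negP.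
set c := G v.
have hc : c != \top.
  apply: contra hv => /eqP hc; apply/eqP; apply/le_anti; rewrite leGH /=.
  by have := lex1 (H v); rewrite -hc.
have Hvc : ~~ (H v <= c).
  by apply: contra hv => h; rewrite eq_le h leGH.
set u := fcomp (fab c \bot) G.
set w := fcomp (fab c \bot) H.
have uR : u \in R by apply: R_comp => //; apply: R_fab.
have wR : w \in R by apply: R_comp => //; apply: R_fab.
have ruw : r u w by case: (rcomp _ _ _ _ (R_fab hc) (R_fab hc) hG hH (rrefl _ (R_fab hc)) rGH).
have uv : u v = \bot by rewrite !ffunE lexx.
have wv : w v = \top by rewrite !ffunE (negbTE Hvc).
have wbt z : w z = \bot \/ w z = \top by rewrite ffunE; apply: fab_bt.
have claim : forall (n : nat) (a : L), a != \top -> (#|[pred z : L | (z <= a)%O]| <= n)%N -> r (fab a \bot) topf.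
  elim=> [|n IH] a ha.
    by rewrite leqn0 => /eqP/card0_eq/(_ a); rewrite inE lexx.
  move=> hcard.
  case: (eqVneq a \bot) => ha0.
    by rewrite ha0; apply: rrefl; apply: topf_R.
  case: hcond => _ _ /(_ a ha0 ha v) [k kR ka].
  set k' := fjoin k (fab a \bot).
  have k'R : k' \in R by apply: R_join => //; apply: R_fab.
  have k'E z : k' z = if z <= a then k z else \top.
    by rewrite /k' !ffunE; case: ifP => _; [rewrite joinx0|rewrite joinx1].
  have e1 : fcomp u k' = fab a \bot.
    apply/ffunP => z; rewrite [LHS]ffunE k'E [RHS]ffunE; case: ifP => hz.
      apply/eqP; rewrite -lex0 -uv.
      apply: Res1_mono (R_Res1 uR) _ _ _; rewrite -ka.
      exact: Res1_mono (R_Res1 kR) _ _ hz.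
    by case: (R_Res1 uR).
  set Q' := fcomp w k'.
  have Q'R : Q' \in R by apply: R_comp.
  have rQ : r (fab a \bot) Q'.
    by rewrite -e1; case: (rcomp _ _ _ _ uR wR k'R k'R ruw (rrefl _ k'R)).
  have Q'bt z : Q' z = \bot \/ Q' z = \top by rewrite ffunE; apply: wbt.
  have [eQ ha'] := bt_fab (R_Res1 Q'R) Q'bt.
  set a' := \join_(z | Q' z == \bot) z in eQ ha'.
  have rQt : r Q' topf.
    rewrite eQ; apply: IH ha' _.
    rewrite -ltnS; apply: leq_trans hcard; apply: proper_card.
    apply/properP; split.
      apply/subsetP => z; rewrite !inE => hz.
      have : Q' z = \bot by rewrite eQ ffunE hz.
      rewrite ffunE k'E; case: ifP => // _.
      by case: (R_Res1 wR) => _ _ ->; move/eqP; rewrite eq_sym (negbTE bot_neq_top).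
    exists a; rewrite !inE ?lexx //.
    apply/negP => haa; have : Q' a = \bot by rewrite eQ ffunE haa.
    by rewrite ffunE k'E lexx ka wv; move/eqP; rewrite eq_sym (negbTE bot_neq_top).
  exact: rtrans _ _ _ (R_fab ha) Q'R topf_R rQ rQt.
have hall : forall f, f \in R -> r f topf.
  move=> f fR; case: hcond => _ /(_ f fR) [a [ha hle]] _.
  have := claim _ a ha (leqnn _).
  move=> rat.
  have [h _] := rcomp _ _ _ _ fR fR (R_fab ha) topf_R (rrefl _ fR) rat.
  rewrite join_topf // in h.
  by rewrite -{1}(_ : fjoin f (fab a \bot) = f) //; apply/ffunP => z; rewrite ffunE join_l.
move=> x y hx hy.
have h2 := rsym _ _ hy topf_R (hall _ hy).
exact: rtrans _ _ _ hx topf_R hy (hall _ hx) h2.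
Qed.

Lemma dir1 :
     let A := fun f => f \in R in
     [/\ semiring_on A (@fjoin d L) (@fcomp d L),
         simple_on A (@fjoin d L) (@fcomp d L),
         add_idempotent_on A (@fjoin d L)
       & greatest_right_not_left_absorbing_on A (@fjoin d L) (@fcomp d L)].
Proof.
move=> A.
split.
- split.
  + split; first by case: hsub => /set0Pn [x hx] _ _; exists x.
    by move=> x y hx hy; split; [apply: R_join|apply: R_comp].
  + by move=> x y _ _; apply/ffunP => z; rewrite !ffunE joinC.
  + by move=> x y z _ _ _; apply/ffunP => w; rewrite !ffunE joinA.
  + by move=> x y z _ _ _; apply/ffunP => w; rewrite !ffunE.
  + move=> x y z hx _ _; split; apply/ffunP => w; rewrite !ffunE //.
    by case: (R_Res1 hx) => ->.
- exact: simpleR.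
- by move=> x _; apply/ffunP => z; rewrite !ffunE joinxx.
- exists topf; split.
  + split; first exact: topf_R.
    exact: join_topf.
  + move=> s /R_Res1 hs; apply/ffunP => x; rewrite /fcomp ffunE.
    exact: Res1_fab.
  + move=> hla; case: exists_mid => a [ha0 ha1].
    have := hla _ (R_fab ha1); move/ffunP/(_ a); rewrite !ffunE !lexx.
    by rewrite lex0 (negbTE ha0) => /eqP; rewrite (negbTE bot_neq_top).
Qed.
End Dir1.

Section Dir2.
Variables (S : finType) (add mul : S -> S -> S) (g : S).
Hypothesis hsr : semiring_on (fun _ : S => True) add mul.
Hypothesis hsim : simple_on (fun _ : S => True) add mul.
Hypothesis hid : add_idempotent_on (fun _ : S => True) add.
Hypothesis hcard : (2 < #|S|)%N.
Hypothesis hg : greatest_on (fun _ : S => True) add g.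
Hypothesis hra : right_absorbing_on (fun _ : S => True) mul g.
Hypothesis hnla : ~ left_absorbing_on (fun _ : S => True) mul g.

Lemma addC x y : add x y = add y x.
Proof. by case: hsr => _ h _ _ _; apply: h. Qed.
Lemma addA x y z : add x (add y z) = add (add x y) z.
Proof. by case: hsr => _ _ h _ _; apply: h. Qed.
Lemma mulA x y z : mul x (mul y z) = mul (mul x y) z.
Proof. by case: hsr => _ _ _ h _; apply: h. Qed.
Lemma mulDr x y z : mul x (add y z) = add (mul x y) (mul x z).
Proof. by case: hsr => _ _ _ _ h; case: (h x y z). Qed.
Lemma mulDl x y z : mul (add x y) z = add (mul x z) (mul y z).
Proof. by case: hsr => _ _ _ _ h; case: (h x y z). Qed.
Lemma addxx x : add x x = x. Proof. exact: hid. Qed.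
Lemma addxg x : add x g = g. Proof. by case: hg => _ h; apply: h. Qed.
Lemma mulxg x : mul x g = g. Proof. exact: hra. Qed.
Lemma gg : mul g g = g. Proof. exact: mulxg. Qed.

Definition Et := {e : S | mul g e == e}.
Definition Lt := option Et.
HB.instance Definition _ := Finite.on Lt.

Definition leL (x y : Lt) : bool :=
  match y with None => true | Some b => match x with None => false | Some a => add (val b) (val a) == val a end end.

Lemma leL_refl : reflexive leL.
Proof. by case=> //= a; rewrite addxx. Qed.
Lemma leL_anti : antisymmetric leL.
Proof.
case=> [a|] [b|] //= /andP[/eqP h1 /eqP h2]; congr Some; apply/val_inj.
by rewrite -[LHS]h1 addC h2.
Qed.
Lemma leL_trans : transitive leL.
Proof.
case=> [a|] [b|] [c|] //= /eqP h1 /eqP h2; apply/eqP.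
by rewrite -h1 addA h2.
Qed.

Definition Ldisp : Order.disp_t := Order.Disp tt tt.
HB.instance Definition _ := Order.Le_isPOrder.Build Ldisp Lt leL_refl leL_anti leL_trans.

Lemma EaddP (a b : Et) : mul g (add (val a) (val b)) == add (val a) (val b).
Proof. by rewrite mulDr (eqP (valP a)) (eqP (valP b)). Qed.

Lemma valE (x : S) (p : mul g x == x) : val (exist (fun e => mul g e == e) x p) = x.
Proof. by []. Qed.

Definition meetL (x y : Lt) : Lt :=
  match x, y with None, _ => y | _, None => x
  | Some a, Some b => Some (exist _ (add (val a) (val b)) (EaddP a b)) end.

Lemma leLE (x y : Lt) : (x <= y) = leL x y. Proof. by []. Qed.

Lemma meetLP (x y z : Lt) : (x <= meetL y z) = (x <= y) && (x <= z).
Proof.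
rewrite !leLE.
case: y z => [b|] [c|]; rewrite /= ?andbT //; case: x => [a|] //=.

apply/eqP/andP => [h|[/eqP h1 /eqP h2]]; last by rewrite -addA h2 h1.
split; apply/eqP.
  by rewrite -h addA addA addxx.
by rewrite -h (addC (val b)) addA addA addxx.
Qed.

Definition joinL (x y : Lt) : Lt :=
  foldr meetL None [seq z <- enum (predT : {pred Lt}) | (x <= z) && (y <= z)].

Lemma foldr_le (s : seq Lt) z : z \in s -> foldr meetL None s <= z.
Proof.
elim: s => //= a s IH; rewrite in_cons => /orP[/eqP ->|/IH h].
  by have := le_refl (meetL a (foldr meetL None s)); rewrite meetLP => /andP[].
by have := le_refl (meetL a (foldr meetL None s)); rewrite meetLP => /andP[_ /le_trans]; apply.
Qed.

Lemma le_foldr (s : seq Lt) x : all (fun z => x <= z) s -> x <= foldr meetL None s.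
Proof.
elim: s => /= [|a s IH]; first by case: x.
by case/andP=> h1 h2; rewrite meetLP h1 IH.
Qed.

Lemma joinLP (x y z : Lt) : (joinL x y <= z) = (x <= z) && (y <= z).
Proof.
apply/idP/idP.
  move=> h; have: (x <= joinL x y) && (y <= joinL x y).
    rewrite !le_foldr //; apply/allP => w; rewrite mem_filter => /andP[/andP[]] //.
  by case/andP=> h1 h2; rewrite (le_trans h1 h) (le_trans h2 h).
by move=> h; apply: foldr_le; rewrite mem_filter h mem_enum.
Qed.

HB.instance Definition _ := Order.POrder_MeetJoin_isLattice.Build Ldisp Lt meetLP joinLP.

Definition gE : Et := exist _ g (introT eqP gg).
Lemma le0L (x : Lt) : (Some gE : Lt) <= x.
Proof. by rewrite leLE; case: x => //= a; rewrite addxg. Qed.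
Lemma leL1 (x : Lt) : x <= (None : Lt).
Proof. by case: x. Qed.
HB.instance Definition _ := Order.hasBottom.Build Ldisp Lt le0L.
HB.instance Definition _ := Order.hasTop.Build Ldisp Lt leL1.

Lemma botE : (\bot : Lt) = Some gE. Proof. by []. Qed.
Lemma topE : (\top : Lt) = None. Proof. by []. Qed.
Lemma meetE (x y : Lt) : x `&` y = meetL x y. Proof. by []. Qed.

Lemma simple_use (r : S -> S -> Prop) : (forall x, r x x) -> (forall x y, r x y -> r y x) ->
  (forall x y z, r x y -> r y z -> r x z) ->
  (forall x y u v, r x y -> r u v -> r (add x u) (add y v) /\ r (mul x u) (mul y v)) ->
  (forall x y, r x y -> x = y) \/ (forall x y, r x y).
Proof.
move=> h1 h2 h3 h4.
case: (hsim (r := r)).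
- by split; [move=> x _; apply: h1|move=> x y _ _; apply: h2|move=> x y z _ _ _; apply: h3|move=> x y u v _ _ _ _; apply: h4].
- by move=> H; left=> x y rxy; apply/(H x y I I).
- by move=> H; right=> x y; apply: H.
Qed.

Lemma EmulP (e : Et) s : mul g (mul (val e) s) == mul (val e) s.
Proof. by rewrite mulA (eqP (valP e)). Qed.

Lemma Eabs (e : Et) s : mul s (val e) = val e.
Proof. by rewrite -(eqP (valP e)) mulA mulxg. Qed.

Definition psi (s : S) (y : Lt) : Lt :=
  match y with None => None | Some e => Some (exist _ (mul (val e) s) (EmulP e s)) end.

Definition phi (s : S) (x : Lt) : Lt := \meet_(y : Lt | x <= psi s y) y.

Lemma psi_meet s y z : psi s (y `&` z) = psi s y `&` psi s z.
Proof.
rewrite !meetE; case: y z => [a|] [b|] //=; congr Some; apply/val_inj => /=.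
by rewrite mulDl.
Qed.

Lemma psi_top s : psi s \top = \top. Proof. by []. Qed.

Lemma psi_mono s y z : y <= z -> psi s y <= psi s z.
Proof. by move=> /meet_l h; rewrite -h psi_meet leIr. Qed.

Lemma adj s x y : (phi s x <= y) = (x <= psi s y).
Proof.
apply/idP/idP => h.
  have : x <= psi s (phi s x).
    rewrite /phi; apply: (big_rec (fun m => x <= psi s m)); first by rewrite psi_top lex1.
    by move=> i m hi hm; rewrite psi_meet lexI hi hm.
  by move=> h2; apply: le_trans h2 (psi_mono s h).
by rewrite /phi; apply: meets_inf.
Qed.

Lemma le_ext (p q : Lt) : (forall y, (p <= y) = (q <= y)) -> p = q.
Proof. by move=> H; apply/le_anti/andP; split; [rewrite H|rewrite -H]. Qed.

Lemma phi_join s x y : phi s (x `|` y) = phi s x `|` phi s y.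
Proof. by apply: le_ext => z; rewrite adj !leUx !adj. Qed.

Lemma phi_bot s : phi s \bot = \bot.
Proof. by apply: le_ext => z; rewrite adj !le0x. Qed.

Lemma phi_top s : phi s \top = \top.
Proof. by apply: le_ext => z; rewrite adj !le1x; case: z. Qed.

Lemma phi_mono s x y : x <= y -> phi s x <= phi s y.
Proof. by move=> /join_r h; rewrite -h phi_join leUl. Qed.

Lemma psi_add s t y : psi (add s t) y = psi s y `&` psi t y.
Proof.
rewrite meetE; case: y => [e|] //=; congr Some; apply/val_inj => /=.
by rewrite mulDr.
Qed.

Lemma phi_add s t x : phi (add s t) x = phi s x `|` phi t x.
Proof. by apply: le_ext => y; rewrite leUx !adj psi_add lexI. Qed.

Lemma psi_mul s t y : psi (mul s t) y = psi t (psi s y).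
Proof. by case: y => [e|] //=; congr Some; apply/val_inj => /=; rewrite mulA. Qed.

Lemma phi_mul s t x : phi (mul s t) x = phi s (phi t x).
Proof. by apply: le_ext => y; rewrite !adj psi_mul. Qed.

Lemma phi_psi s t : (forall x, phi s x = phi t x) -> forall e : Et, mul (val e) s = mul (val e) t.
Proof.
move=> H e.
have : psi s (Some e) = psi t (Some e).
  by apply/le_anti/andP; split; [rewrite -adj -H adj|rewrite -adj H adj].
by case=> ->.
Qed.

Lemma psiE (e e' : Et) : psi (val e) (Some e') = Some e.
Proof. by congr Some; apply/val_inj => /=; rewrite Eabs. Qed.

Lemma phi_E (e : Et) x : phi (val e) x = if x <= Some e then \bot else \top.
Proof.
case: ifP => hx.
  by apply/le_anti; rewrite le0x andbT adj botE psiE.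
apply: le_ext => y; rewrite adj; case: y => [e'|]; rewrite ?psiE ?hx ?lex1 //.
Qed.

Lemma fabE (e : Et) x : fab (Some e : Lt) \bot x = phi (val e) x.
Proof. by rewrite ffunE phi_E. Qed.

Lemma bot_neq_topL : (\bot : Lt) != \top. Proof. by []. Qed.

Lemma phi_bt s n : n = \bot \/ n = \top -> phi s n = n.
Proof. by case=> ->; [rewrite phi_bot|rewrite phi_top]. Qed.

Lemma fab_bt' (a x : Lt) : fab a \bot x = \bot \/ fab a \bot x = \top.
Proof. by rewrite ffunE; case: ifP; [left|right]. Qed.

Definition Phi (s : S) : {ffun Lt -> Lt} := [ffun x => phi s x].

Lemma exists_t0 : exists t0, mul g t0 <> g.
Proof.
apply: NNPP => hn; apply: hnla => s _; apply: NNPP => h; apply: hn; by exists s.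
Qed.

Lemma Phi_inj : injective Phi.
Proof.
have [t0 ht0] := exists_t0.
pose rE s t := forall e : Et, mul (val e) s = mul (val e) t.
case: (@simple_use rE).
- by [].
- by move=> x y h e.
- by move=> x y z h1 h2 e; rewrite h1 h2.
- move=> x y u v rxy ruv; split => e; first by rewrite !mulDr rxy ruv.
  rewrite !mulA rxy.
  exact: (ruv (exist _ (mul (val e) y) (EmulP e y))).
- move=> H s t /ffunP hst; apply: H; apply: phi_psi => x.
  by have := hst x; rewrite !ffunE.
- move=> H; exfalso; apply: ht0.
  by have := H t0 g gE => /= ->; rewrite gg.
Qed.

Definition Tp s := exists a : Lt, a != \top /\ forall x, fab a \bot x <= phi s x.

Lemma Tp_all s : Tp s.
Proof.
have [t0 ht0] := exists_t0.
pose e0 : Et := exist _ (mul g t0) (EmulP gE t0).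
have Tg : Tp g.
  by exists (Some gE); split => // x; rewrite fabE.
have Te0 : Tp (mul g t0).
  by exists (Some e0); split => // x; rewrite fabE.
have Tadd x u : Tp x -> Tp (add x u).
  case=> a [ha h]; exists a; split => // z.
  by rewrite phi_add; apply: le_trans (h z) (leUl _ _).
have Tmull x u : Tp x -> Tp (mul u x).
  case=> a [ha h]; exists a; split => // z.
  rewrite phi_mul; rewrite -(phi_bt u (fab_bt' a z)).
  exact: phi_mono.
have Tmulr x u : Tp x -> Tp (mul x u).
  case=> a [ha h]; case: a ha h => [e|] // _ h.
  exists (Some (exist _ (mul (val e) u) (EmulP e u))); split => // z.
  rewrite fabE /= phi_mul -fabE phi_mul; exact: h.
pose rT s t := s = t \/ (Tp s /\ Tp t).
case: (@simple_use rT).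
- by move=> x; left.
- by move=> x y [->|[]]; [left|right].
- by move=> x y z [->|[h1 h2]] [<-|[h3 h4]]; [left|right|right|right].
- move=> x y u v [<-|[h1 h2]] [<-|[h3 h4]].
  + by split; left.
  + by split; right; split; rewrite 1?addC; (apply: Tadd || apply: Tmull).
  + by split; right; split; (apply: Tadd || apply: Tmulr).
  + by split; right; split; (apply: Tadd || apply: Tmulr).
- move=> H; exfalso; apply: ht0; symmetry; apply: H; by right.
- by move=> H; case: (H s g) => [->|[]].
Qed.

Lemma density (a : Lt) : a != \bot -> a != \top -> forall b, exists s, phi s a = b.
Proof.
case: a => [ea|] // ha0 _.
set a := Some ea.
have pa0 : phi (val ea) a = \bot by rewrite phi_E lexx.
have pag : phi g a = \top by rewrite -[g]/(val gE) phi_E -botE lex0 (negbTE ha0).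
pose rN s t := forall u, phi s (phi u a) = phi t (phi u a).
case: (@simple_use rN).
- by [].
- by move=> x y h u.
- by move=> x y z h1 h2 u; rewrite h1 h2.
- move=> x y u v rxy ruv; split => w; first by rewrite !phi_add rxy ruv.
  have e1 : phi u (phi w a) = phi (mul u w) a by rewrite phi_mul.
  by rewrite !phi_mul e1 rxy -e1 ruv.
- move=> H b; case: b => [eb|]; last by exists g.
  set b := Some eb.
  set estar := \join_(u : S | phi u a <= b) phi u a.
  have [w hw] : exists w, phi w a = estar.
    apply: (big_rec (fun y => exists w, phi w a = y)); first by exists (val ea).
    by move=> i y _ [w <-]; exists (add i w); rewrite phi_add.
  have hle : estar <= b by apply/joinsP.
  have hiff u : (phi u a <= b) = (phi u a <= estar).
    apply/idP/idP => h; first by rewrite /estar (bigD1 u) //= leUl.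
    exact: le_trans h hle.
  case: estar hw hle hiff => [ee|] // hw hle hiff.
  exists w; rewrite hw; congr Some; apply/val_inj; apply: H => u.
  by rewrite !phi_E hiff.
- move=> H b.
  have bt u : phi u a = \bot \/ phi u a = \top.
    case E: (phi u a) => [e|]; last by right.
    have := H (val e) (val gE) u; rewrite E !phi_E lexx.
    case: ifP => [h _|_ hh]; last by move: hh; rewrite botE topE.
    by left; apply/eqP; rewrite -lex0 botE.
  pose ra s t := phi s a = phi t a.
  case: (@simple_use ra).
  + by [].
  + by [].
  + by move=> x y z; rewrite /ra => ->.
  + move=> x y u v; rewrite /ra => rxy ruv; split; first by rewrite !phi_add rxy ruv.
    by rewrite !phi_mul (phi_bt x (bt u)) (phi_bt y (bt v)).
  + move=> H2; exfalso.
    have f_inj : injective (fun s => phi s a == \top).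
      move=> s t /= hst; apply: H2; rewrite /ra.
      by case: (bt s) (bt t) hst => -> [] ->.
    by have := leq_card _ f_inj; rewrite card_bool leqNgt hcard.
  + by move=> H2; exfalso; have := H2 g (val ea); rewrite /ra pag pa0.
Qed.

Lemma dir2 : exists (d : Order.disp_t) (L : finTBLatticeType d) (R : {set {ffun L -> L}}),
       [/\ (2 < #|L|)%N, subsemiring_Res1 R, conditions_Res1 R &
         exists phi : S -> {ffun L -> L},
           [/\ injective phi,
               (forall f, f \in R <-> exists s, phi s = f),
               (forall x y, phi (add x y) = fjoin (phi x) (phi y))
             & (forall x y, phi (mul x y) = fcomp (phi x) (phi y))]].
Proof.
have [t0 ht0] := exists_t0.
pose e0 : Et := exist _ (mul g t0) (EmulP gE t0).
exists Ldisp, Lt, [set Phi s | s : S].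
have PhiR s : Phi s \in [set Phi s | s : S] by apply: imset_f.
have Padd x y : Phi (add x y) = fjoin (Phi x) (Phi y).
  by apply/ffunP => z; rewrite !ffunE phi_add.
have Pmul x y : Phi (mul x y) = fcomp (Phi x) (Phi y).
  by apply/ffunP => z; rewrite !ffunE phi_mul.
split.
- apply/card_gt2P; exists (None : Lt), (Some gE : Lt), (Some e0 : Lt); split => //.
  split => //; apply/negP => /eqP hh; apply: ht0.
  by have := f_equal (fun o : Lt => if o is Some e then val e else g) hh => /= h; rewrite -h.
- split.
  + by apply/set0Pn; exists (Phi g).
  + move=> f /imsetP [s _ ->]; split => [x y||]; rewrite !ffunE.
    * exact: phi_join.
    * exact: phi_bot.
    * exact: phi_top.
  + by move=> f h /imsetP [s _ ->] /imsetP [t _ ->]; rewrite -Padd -Pmul; split; apply: PhiR.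
- split.
  + case=> [e|] // _; apply/imsetP; exists (val e) => //.
    by apply/ffunP => x; rewrite fabE ffunE.
  + move=> f /imsetP [s _ ->]; have [a [ha h]] := Tp_all s.
    by exists a; split => // x; rewrite [Phi s x]ffunE; apply: h.
  + move=> a ha0 ha1 b; have [s hs] := density ha0 ha1 b.
    by exists (Phi s) => //; rewrite ffunE.
- exists Phi; split => //.
  + exact: Phi_inj.
  + move=> f; split; first by case/imsetP => s _ ->; exists s.
    by case=> s <-.
Qed.
End Dir2.

Theorem theorem5p2 :
  (forall (d : Order.disp_t) (L : finTBLatticeType d) (R : {set {ffun L -> L}}),
     (2 < #|L|)%N ->
     subsemiring_Res1 R ->
     conditions_Res1 R ->
     let A := fun f => f \in R in
     [/\ semiring_on A (@fjoin d L) (@fcomp d L),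
         simple_on A (@fjoin d L) (@fcomp d L),
         add_idempotent_on A (@fjoin d L)
       & greatest_right_not_left_absorbing_on A (@fjoin d L) (@fcomp d L)])
  /\
  (forall (S : finType) (add mul : S -> S -> S),
     let A := fun _ : S => True in
     semiring_on A add mul ->
     simple_on A add mul ->
     add_idempotent_on A add ->
     (2 < #|S|)%N ->
     greatest_right_not_left_absorbing_on A add mul ->
     exists (d : Order.disp_t) (L : finTBLatticeType d) (R : {set {ffun L -> L}}),
       [/\ (2 < #|L|)%N, subsemiring_Res1 R, conditions_Res1 R &
         exists phi : S -> {ffun L -> L},
           [/\ injective phi,
               (forall f, f \in R <-> exists s, phi s = f),
               (forall x y, phi (add x y) = fjoin (phi x) (phi y))
             & (forall x y, phi (mul x y) = fcomp (phi x) (phi y))]]).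
Proof.
split.
- move=> d L R hL hsub hcond; exact: dir1.
- move=> S add mul A hsr hsim hid hcard [g [hg hra hnla]]; exact: (dir2 hsr hsim hid hcard hg hra hnla).
Qed.
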